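(* Let $T$ be a continuous linear operator on a topological vector space $X$ and let $\mathcal F$ be a Furstenberg family. If $T$ is hypercyclic and has the $\mathscr P_{\mathcal F}$ property, then $T$ is $b\mathcal F$-hypercyclic.
   Context: $\mathbb N$ denotes the nonnegative integers. A Furstenberg family is a nonempty collection $\mathcal F\subseteq\mathcal P(\mathbb N)$ with $\emptyset\notin\mathcal F$ which is hereditarily upward. The block family $b\mathcal F$: $S\in b\mathcal F$ iff there is $F\in\mathcal F$ such that for every finite $R\subseteq F$ there is $n\in\mathbb N$ with $R+n\subseteq S$. $N_T(x,U)=\{n\in\mathbb N:T^nx\in U\}$. For a family $\mathcal G$, $T$ is $\mathcal G$-hypercyclic if there is $x$ with $N_T(x,U)\in\mathcal G$ for every nonempty open $U$; hypercyclic means having a vector with dense orbit. $T$ has the $\mathscr P_{\mathcal F}$ property if for every nonempty open $U\subseteq X$ there is $x\in X$ with $N_T(x,U)\in\mathcal F$. *)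

(* Defs.v *)
From HB Require Import structures.
From mathcomp Require Import all_boot all_order all_algebra.
From mathcomp Require Import all_classical all_reals all_analysis.
Set Implicit Arguments. Unset Strict Implicit. Unset Printing Implicit Defensive.
Import Order.TTheory GRing.Theory Num.Theory.
Local Open Scope classical_set_scope.

Definition furstenberg_family (F : set (set nat)) : Prop :=
  F !=set0 /\ ~ F set0 /\ (forall A B : set nat, F A -> A `<=` B -> F B).

Definition block_family (F : set (set nat)) : set (set nat) :=
  fun S => exists2 F0, F F0 &
    forall R : set nat, finite_set R -> R `<=` F0 ->
      exists n : nat, [set (r + n)%N | r in R] `<=` S.

Definition return_set (X : Type) (T : X -> X) (x : X) (U : set X) : set nat :=
  [set n | U (iter n T x)].

Definition hypercyclic (X : topologicalType) (T : X -> X) : Prop :=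
  exists x : X, dense (range (fun n : nat => iter n T x)).

Definition G_hypercyclic (X : topologicalType) (G : set (set nat)) (T : X -> X) : Prop :=
  exists x : X, forall U : set X, open U -> U !=set0 -> G (return_set T x U).

Definition P_property (X : topologicalType) (F : set (set nat)) (T : X -> X) : Prop :=
  forall U : set X, open U -> U !=set0 -> exists x : X, F (return_set T x U).

(* Main.v *)
Require Import Defs.
From HB Require Import structures.
From mathcomp Require Import all_boot all_order all_algebra.
From mathcomp Require Import all_classical all_reals all_analysis.
Local Open Scope classical_set_scope.

Lemma iter_cont (X : topologicalType) (f : X -> X) :
  continuous f -> forall r, continuous (fun x => iter r f x).
Proof.
move=> cf; elim=> [|r IH] x /=; first exact: cvg_id.
exact: (continuous_comp (IH x) (cf _)).
Qed.

Lemma open_pre_seq (X : topologicalType) (f : X -> X) (U : set X) (y : X) :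
  continuous f -> open U -> forall s : seq nat,
  (forall r, r \in s -> U (iter r f y)) ->
  exists V : set X, [/\ open V, V y &
    forall z, V z -> forall r, r \in s -> U (iter r f z)].
Proof.
move=> cf oU; elim=> [|a s IH] H.
  by exists setT; split => //; exact: openT.
have [|V [oV Vy HV]] := IH.
  by move=> r rs; apply: H; rewrite in_cons rs orbT.
exists (V `&` (fun x => iter a f x) @^-1` U); split.
- apply: openI => //; apply: open_comp => //.
  by move=> x _; apply: iter_cont.
- by split => //=; apply: H; rewrite in_cons eqxx.
- move=> z [Vz Uz] r; rewrite in_cons => /orP [/eqP ->|rs] //.
  exact: HV.
Qed.

Theorem mainTheorem5 (K : numFieldType) (X : topologicalLmodType K)
  (T : {linear X -> X}) (F : set (set nat)) :
  continuous T -> furstenberg_family F ->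
  hypercyclic T -> P_property F T -> G_hypercyclic (block_family F) T.
Proof.
move=> cT _ [x0 dx0] PF; exists x0 => U oU U0.
have [y Fy] := PF U oU U0.
exists (return_set T y U) => // R /finite_seqP [s ->] Rsub.
have [V [oV Vy HV]] := @open_pre_seq X T U y cT oU s (fun r rs => Rsub r rs).
have [z [Vz [n _ nz]]] := dx0 V (ex_intro _ y Vy) oV.
exists n => _ [r rs <-].
rewrite /return_set /= iterD nz; exact: HV.
Qed.
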